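(* The function $h$ is non-differentiable on $D(h)$: at no point $x_0\in D(h)$ does the difference quotient $\frac{h(x)-h(x_0)}{x-x_0}$, $x\in D(h)$, $x\to x_0$, have a finite limit.
   Context: Let $q>3$ be an integer, fix $u\in\{0,1,\ldots,q-1\}$, and put $\Theta=\{1,2,\ldots,q-1\}\setminus\{u\}$. The nega-$q$-ary representation is $\Delta^{-q}_{\beta_1\beta_2\ldots}=\sum_{k\ge1}\frac{\beta_k}{(-q)^k}$, $\beta_k\in\{0,\ldots,q-1\}$. For a sequence $(\alpha_n)_{n\ge1}$ with $\alpha_n\in\Theta$, let $x((\alpha_n))$ be the number whose nega-$q$-ary digit string is the concatenation of the blocks $\underbrace{u\ldots u}_{\alpha_n-1}\alpha_n$ ($\alpha_n-1$ copies of $u$ followed by the digit $\alpha_n$), $n=1,2,\ldots$; equivalently $x=-\frac{u}{q+1}+\sum_{n\ge1}\frac{\alpha_n-u}{(-q)^{\alpha_1+\cdots+\alpha_n}}$. Let $D(h)$ be the set of all such $x$, and define $h:D(h)\to\mathbb R$ by $h(x)=\Delta^{-q}_{\alpha_1\alpha_2\ldots}=\sum_{n\ge1}\frac{\alpha_n}{(-q)^n}$. *)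

(* Defs.v *)
From Stdlib Require Import Reals Lra Lia Classical ClassicalEpsilon.
Open Scope R_scope.

(* Sum of a convergent series (the unique l with infinite_sum f l);
   arbitrary (chosen) value if the series diverges -- all series used
   below converge absolutely. *)
Definition series_sum (f : nat -> R) : R :=
  epsilon (inhabits 0) (fun l => infinite_sum f l).

(* Admissible digit sequences: alpha n in Theta = {1,...,q-1} \ {u}.
   The paper's index n >= 1 is shifted to n >= 0 here. *)
Definition admissible (q u : nat) (alpha : nat -> nat) : Prop :=
  forall n, (1 <= alpha n)%nat /\ (alpha n < q)%nat /\ alpha n <> u.

(* partial sums alpha_1 + ... + alpha_{n} (paper indexing), i.e.
   alpha 0 + ... + alpha n here *)
Fixpoint psum (alpha : nat -> nat) (n : nat) : nat :=
  match n with
  | O => alpha O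
  | S m => (psum alpha m + alpha (S m))%nat
  end.

Definition xval (q u : nat) (alpha : nat -> nat) : R :=
  - INR u / (INR q + 1)
  + series_sum (fun n => (INR (alpha n) - INR u) / (- INR q) ^ (psum alpha n)).

Definition hval (q : nat) (alpha : nat -> nat) : R :=
  series_sum (fun n => INR (alpha n) / (- INR q) ^ (S n)).

Definition Dh (q u : nat) (x : R) : Prop :=
  exists alpha, admissible q u alpha /\ xval q u alpha = x.

(* h : D(h) -> R, h(x(alpha)) = hval alpha (extended by an arbitrary
   value outside D(h); the representation alpha of x is chosen). *)
Definition h (q u : nat) (x : R) : R :=
  hval q (epsilon (inhabits (fun _ => 1%nat))
                  (fun alpha => admissible q u alpha /\ xval q u alpha = x)).

(* Main.v *)
Require Import Defs.
From Stdlib Require Import Reals Lra Lia Classical ClassicalEpsilon FunctionalExtensionality.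
From Coquelicot Require Import Coquelicot.
Open Scope R_scope.

Lemma ss_Series f : ex_series f -> series_sum f = Series f.
Proof.
  intros [l Hl]. rewrite (is_series_unique f l Hl).
  unfold series_sum. apply is_series_Reals in Hl.
  apply (uniqueness_sum f).
  - apply (epsilon_spec (inhabits 0) (fun l => infinite_sum f l)). eauto.
  - exact Hl.
Qed.

Lemma term_bound (q : nat) (A : R) (m k : nat) :
  (2 <= q)%nat -> Rabs A <= INR q -> (S k <= m)%nat ->
  Rabs (A / (- INR q) ^ m) <= (/ INR q) ^ k.
Proof.
  intros hq hA hm.
  assert (HQ : 2 <= INR q) by (apply (le_INR 2); lia).
  unfold Rdiv. rewrite Rabs_mult, Rabs_inv, <- RPow_abs, Rabs_Ropp. rewrite (Rabs_pos_eq (INR q)) by lra.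
  rewrite pow_inv.
  assert (H1 : INR q ^ S k <= INR q ^ m) by (apply Rle_pow; [lra|lia]).
  assert (H2 : 0 < INR q ^ k) by (apply pow_lt; lra).
  simpl in H1.
  apply Rle_trans with (INR q * / (INR q * INR q ^ k)).
  - apply Rmult_le_compat; try lra. apply Rabs_pos.
    left; apply Rinv_0_lt_compat; apply pow_lt; lra.
    apply Rinv_le_contravar; auto. apply Rmult_lt_0_compat; lra.
  - right. field. lra.
Qed.

Lemma inv_lt1 (x : R) : 1 < x -> / x < 1.
Proof. intro h. replace 1 with (/ 1) by apply Rinv_1. apply Rinv_lt_contravar; lra. Qed.

Lemma ex_series_bound (f : nat -> R) (q : nat) :
  (2 <= q)%nat -> (forall k, Rabs (f k) <= (/ INR q) ^ k) -> ex_series f.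
Proof.
  intros hq H.
  assert (HQ : 2 <= INR q) by (apply (le_INR 2); lia).
  apply (@ex_series_le R_AbsRing R_CompleteNormedModule f (fun k => (/ INR q) ^ k)).
  - intros n. exact (H n).
  - apply ex_series_geom. rewrite Rabs_pos_eq.
    apply inv_lt1; lra. left; apply Rinv_0_lt_compat; lra.
Qed.

Lemma series_bound (f : nat -> R) (q : nat) :
  (2 <= q)%nat -> (forall k, Rabs (f k) <= (/ INR q) ^ k) -> Rabs (Series f) <= 2.
Proof.
  intros hq H.
  assert (HQ : 2 <= INR q) by (apply (le_INR 2); lia).
  assert (Hg : Rabs (/ INR q) < 1).
  { rewrite Rabs_pos_eq. apply inv_lt1; lra. left; apply Rinv_0_lt_compat; lra. }
  eapply Rle_trans. apply Series_Rabs.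
  apply (ex_series_bound _ q); auto. intro k. rewrite Rabs_Rabsolu; auto.
  eapply Rle_trans. apply Series_le with (b := fun k => (/ INR q) ^ k).
  intros; split; auto. apply Rabs_pos. apply ex_series_geom; auto.
  rewrite (is_series_unique _ _ (is_series_geom _ Hg)).
  assert (/ INR q <= /2) by (apply Rinv_le_contravar; lra).
  assert (0 < / INR q) by (apply Rinv_0_lt_compat; lra).
  apply Rle_trans with (/ (1 - /2)). apply Rinv_le_contravar; lra. lra.
Qed.
Definition sh1 (a : nat -> nat) : nat -> nat := fun k => a (S k).
Definition xt (q u : nat) (a : nat -> nat) (k : nat) : R :=
  (INR (a k) - INR u) / (- INR q) ^ (psum a k).
Definition ht (q : nat) (a : nat -> nat) (k : nat) : R :=
  INR (a k) / (- INR q) ^ (S k).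

Lemma psum_S a k : psum a (S k) = (a 0 + psum (sh1 a) k)%nat.
Proof.
  induction k as [|k IH].
  - reflexivity.
  - change (psum a (S (S k))) with (psum a (S k) + a (S (S k)))%nat.
    rewrite IH. simpl. unfold sh1. lia.
Qed.

Lemma psum_ge q u a k : admissible q u a -> (S k <= psum a k)%nat.
Proof.
  intro H. induction k as [|k IH]; simpl.
  - destruct (H 0%nat); lia.
  - destruct (H (S k)); lia.
Qed.

Lemma adm_sh1 q u a : admissible q u a -> admissible q u (sh1 a).
Proof. intros H n. apply (H (S n)). Qed.

Lemma xt_bound q u a k : (2 <= q)%nat -> (u < q)%nat -> admissible q u a ->
  Rabs (xt q u a k) <= (/ INR q) ^ k.
Proof.
  intros hq hu H. unfold xt. apply term_bound; auto.
  - destruct (H k) as [h1 [h2 h3]].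
    assert (INR (a k) <= INR q) by (apply le_INR; lia).
    assert (INR u <= INR q) by (apply le_INR; lia).
    assert (0 <= INR (a k)) by apply pos_INR.
    assert (0 <= INR u) by apply pos_INR.
    apply Rabs_le; lra.
  - eapply psum_ge; eauto.
Qed.

Lemma ht_bound q u a k : (2 <= q)%nat -> admissible q u a ->
  Rabs (ht q a k) <= (/ INR q) ^ k.
Proof.
  intros hq H. unfold ht. apply term_bound; auto.
  destruct (H k) as [h1 [h2 h3]].
  assert (INR (a k) <= INR q) by (apply le_INR; lia).
  assert (0 <= INR (a k)) by apply pos_INR.
  apply Rabs_le; lra.
Qed.


Lemma negq_pow_nz q m : (1 <= q)%nat -> (- INR q) ^ m <> 0.
Proof.
  intro hq. apply pow_nonzero. assert (1 <= INR q) by (apply (le_INR 1); lia). lra.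
Qed.

Lemma xval_S q u a : (2 <= q)%nat -> (u < q)%nat -> admissible q u a ->
  xval q u a = - INR u / (INR q + 1) + xt q u a 0
     + / (- INR q) ^ (a 0%nat) * (xval q u (sh1 a) + INR u / (INR q + 1)).
Proof.
  intros hq hu H. unfold xval.
  fold (xt q u a). fold (xt q u (sh1 a)).
  rewrite !ss_Series.
  2, 3: apply (ex_series_bound _ q); auto; intro; apply (xt_bound q u); auto using adm_sh1.
  rewrite Series_incr_1.
  2: apply (ex_series_bound _ q); auto; intro; apply (xt_bound q u); auto using adm_sh1.
  rewrite (Series_ext (fun k => xt q u a (S k)) (fun k => / (- INR q) ^ (a 0%nat) * xt q u (sh1 a) k)).
  - rewrite Series_scal_l.
    replace (- INR u / (INR q + 1) + Series (xt q u (sh1 a)) + INR u / (INR q + 1)) with (Series (xt q u (sh1 a))) by lra. lra.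
  - intro k. unfold xt. rewrite psum_S, pow_add. unfold sh1.
    field. split; apply negq_pow_nz; lia.
Qed.

Lemma hval_S q u a : (2 <= q)%nat -> admissible q u a ->
  hval q a = - (INR (a 0%nat) + hval q (sh1 a)) / INR q.
Proof.
  intros hq H. unfold hval.
  fold (ht q a). fold (ht q (sh1 a)).
  assert (HQ : 2 <= INR q) by (apply (le_INR 2); lia).
  rewrite !ss_Series.
  2, 3: apply (ex_series_bound _ q); auto; intro; apply (ht_bound q u); auto using adm_sh1.
  rewrite Series_incr_1.
  2: apply (ex_series_bound _ q); auto; intro; apply (ht_bound q u); auto using adm_sh1.
  rewrite (Series_ext (fun k => ht q a (S k)) (fun k => / (- INR q) * ht q (sh1 a) k)).
  - rewrite Series_scal_l. unfold ht at 1. simpl. field. lra.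
  - intro k. unfold ht. unfold sh1. change (S (S k)) with (1 + S k)%nat. rewrite pow_add.
    field. split; [apply negq_pow_nz; lia| lra].
Qed.

Definition pre (q c : nat) (X : R) : R := - (INR c + X) / INR q.
Fixpoint ipre (q u k : nat) (X : R) : R :=
  match k with O => X | S k => pre q u (ipre q u k X) end.
Definition blk (q u a : nat) (X : R) : R := ipre q u (a - 1) (pre q a X).

Lemma ipre_closed q u k X : (1 <= q)%nat ->
  ipre q u k X = - INR u / (INR q + 1) + (- / INR q) ^ k * (X + INR u / (INR q + 1)).
Proof.
  intro hq. assert (HQ : 1 <= INR q) by (apply (le_INR 1); lia).
  induction k as [|k IH]; simpl.
  - field. lra.
  - unfold pre. rewrite IH. field. lra.
Qed.

Lemma blk_closed q u a X : (1 <= q)%nat -> (1 <= a)%nat ->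
  blk q u a X = - INR u / (INR q + 1)
     + (INR a - INR u + X + INR u / (INR q + 1)) / (- INR q) ^ a.
Proof.
  intros hq ha. assert (HQ : 1 <= INR q) by (apply (le_INR 1); lia).
  unfold blk. rewrite ipre_closed by auto. unfold pre.
  destruct a as [|a]; [lia|]. replace (S a - 1)%nat with a by lia.
  simpl. rewrite <- Rinv_opp, pow_inv. field. split; [lra|]. split; [|lra].
  apply negq_pow_nz; lia.
Qed.

Lemma xval_blk q u a : (2 <= q)%nat -> (u < q)%nat -> admissible q u a ->
  xval q u a = blk q u (a 0%nat) (xval q u (sh1 a)).
Proof.
  intros hq hu H. rewrite (xval_S q u a) at 1 by auto.
  rewrite blk_closed by (try lia; destruct (H 0%nat); lia).
  unfold xt. simpl psum. field. split; [assert (0 <= INR q) by apply pos_INR; lra | apply negq_pow_nz; lia].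
Qed.

Lemma blk_diff q u a X Y : (1 <= q)%nat -> (1 <= a)%nat ->
  blk q u a X - blk q u a Y = (X - Y) / (- INR q) ^ a.
Proof.
  intros hq ha. rewrite !blk_closed by auto. field. split; [apply negq_pow_nz; lia | assert (0 <= INR q) by apply pos_INR; lra].
Qed.

Lemma xval_crude q u a : (2 <= q)%nat -> (u < q)%nat -> admissible q u a ->
  Rabs (xval q u a) <= 3.
Proof.
  intros hq hu H. unfold xval. fold (xt q u a).
  rewrite ss_Series.
  2: apply (ex_series_bound _ q); auto; intro; apply (xt_bound q u); auto.
  assert (B := series_bound (xt q u a) q hq (fun k => xt_bound q u a k hq hu H)).
  assert (HQ : 2 <= INR q) by (apply (le_INR 2); lia).
  assert (Hu : INR u <= INR q) by (apply le_INR; lia).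
  assert (0 <= INR u) by apply pos_INR.
  assert (0 <= INR u / (INR q + 1) <= 1).
  { split. apply Rdiv_le_0_compat; lra.
    apply Rmult_le_reg_r with (INR q + 1). lra. unfold Rdiv. rewrite Rmult_assoc, Rinv_l by lra. lra. }
  apply Rabs_le_between in B. apply Rabs_le. unfold Rdiv in *. lra.
Qed.

Definition lo (q : nat) : R := - INR q / (INR q + 1).
Definition hi (q : nat) : R := / (INR q + 1).

Lemma hi_lo q : hi q - lo q = 1.
Proof. unfold hi, lo. assert (0 <= INR q) by apply pos_INR. field. lra. Qed.

Lemma pre_hi_eq q c X e : (1 <= q)%nat ->
  hi q + e / INR q - pre q c X = (INR c + (X - lo q + e)) / INR q.
Proof.
  intro hq. assert (1 <= INR q) by (apply (le_INR 1); lia).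
  unfold hi, lo, pre. field. lra.
Qed.

Lemma pre_lo_eq q c X e : (1 <= q)%nat ->
  pre q c X - (lo q - e / INR q) = ((INR q - 1 - INR c) + (hi q + e - X)) / INR q.
Proof.
  intro hq. assert (1 <= INR q) by (apply (le_INR 1); lia).
  unfold hi, lo, pre. field. lra.
Qed.

Lemma div_nonneg A Q : 0 <= A -> 0 < Q -> 0 <= A / Q.
Proof. intros. apply Rdiv_le_0_compat; auto. Qed.
Lemma div_pos A Q : 0 < A -> 0 < Q -> 0 < A / Q.
Proof. intros. apply Rdiv_lt_0_compat; auto. Qed.

Lemma cbound q c : (c < q)%nat -> 0 <= INR q - 1 - INR c.
Proof. intro h. assert (INR (S c) <= INR q) by (apply le_INR; lia). rewrite S_INR in H. lra. Qed.

Lemma pre_m q c X e : (2 <= q)%nat -> (c < q)%nat -> 0 <= e ->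
  lo q - e <= X <= hi q + e -> lo q - e / INR q <= pre q c X <= hi q + e / INR q.
Proof.
  intros hq hc he [h1 h2].
  assert (HQ : 2 <= INR q) by (apply (le_INR 2); lia).
  assert (0 <= INR c) by apply pos_INR.
  pose proof (cbound q c hc).
  pose proof (pre_hi_eq q c X e ltac:(lia)).
  pose proof (pre_lo_eq q c X e ltac:(lia)).
  assert (0 <= (INR c + (X - lo q + e)) / INR q) by (apply div_nonneg; lra).
  assert (0 <= ((INR q - 1 - INR c) + (hi q + e - X)) / INR q) by (apply div_nonneg; lra).
  lra.
Qed.

Lemma pre_open q c X : (2 <= q)%nat -> (c < q)%nat ->
  lo q < X < hi q -> lo q < pre q c X < hi q.
Proof.
  intros hq hc [h1 h2].
  assert (HQ : 2 <= INR q) by (apply (le_INR 2); lia).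
  assert (0 <= INR c) by apply pos_INR.
  pose proof (cbound q c hc).
  pose proof (pre_hi_eq q c X 0 ltac:(lia)).
  pose proof (pre_lo_eq q c X 0 ltac:(lia)).
  assert (0 < (INR c + (X - lo q + 0)) / INR q) by (apply div_pos; lra).
  assert (0 < ((INR q - 1 - INR c) + (hi q + 0 - X)) / INR q) by (apply div_pos; lra).
  unfold Rdiv in *. rewrite Rmult_0_l in *. lra.
Qed.

Lemma pre_closed q c X : (2 <= q)%nat -> (c < q)%nat ->
  lo q <= X <= hi q -> lo q <= pre q c X <= hi q.
Proof.
  intros hq hc h.
  assert (HQ : 2 <= INR q) by (apply (le_INR 2); lia).
  pose proof (pre_m q c X 0 hq hc (Rle_refl 0)).
  unfold Rdiv in H. rewrite Rmult_0_l in H. rewrite !Rminus_0_r, !Rplus_0_r in *. apply H. lra.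
Qed.

Lemma pre_strict q c X : (2 <= q)%nat -> (1 <= c)%nat -> (S c < q)%nat ->
  lo q <= X <= hi q -> lo q < pre q c X < hi q.
Proof.
  intros hq hc1 hc [h1 h2].
  assert (HQ : 2 <= INR q) by (apply (le_INR 2); lia).
  assert (1 <= INR c) by (apply (le_INR 1); lia).
  pose proof (cbound q (S c) hc). rewrite S_INR in H0.
  pose proof (pre_hi_eq q c X 0 ltac:(lia)).
  pose proof (pre_lo_eq q c X 0 ltac:(lia)).
  assert (0 < (INR c + (X - lo q + 0)) / INR q) by (apply div_pos; lra).
  assert (0 < ((INR q - 1 - INR c) + (hi q + 0 - X)) / INR q) by (apply div_pos; lra).
  unfold Rdiv in *. rewrite Rmult_0_l in *. lra.
Qed.

Lemma pre2_strict q c X : (2 <= q)%nat -> (c < q)%nat ->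
  lo q <= X <= hi q -> lo q < pre q c (pre q c X) < hi q.
Proof.
  intros hq hc hX.
  assert (HQ : 2 <= INR q) by (apply (le_INR 2); lia).
  destruct (Nat.eq_dec c 0) as [e0|n0].
  -
    assert (hZ : lo q < pre q c X <= hi q).
    { pose proof (pre_closed q c X hq hc hX).
      pose proof (pre_lo_eq q c X 0 ltac:(lia)).
      subst c. simpl INR in *.
      assert (0 < ((INR q - 1 - 0) + (hi q + 0 - X)) / INR q) by (apply div_pos; lra).
      unfold Rdiv in *. rewrite Rmult_0_l in *. lra. }
    pose proof (pre_closed q c (pre q c X) hq hc ltac:(lra)).
    pose proof (pre_hi_eq q c (pre q c X) 0 ltac:(lia)).
    pose proof (pre_lo_eq q c (pre q c X) 0 ltac:(lia)).
    subst c. simpl INR in *.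
    assert (0 < (0 + (pre q 0 X - lo q + 0)) / INR q) by (apply div_pos; lra).
    assert (0 < ((INR q - 1 - 0) + (hi q + 0 - pre q 0 X)) / INR q) by (apply div_pos; lra).
    unfold Rdiv in *. rewrite Rmult_0_l in *. lra.
  - destruct (Nat.eq_dec (S c) q) as [e1|n1].
    + assert (hZ : lo q <= pre q c X < hi q).
      { pose proof (pre_closed q c X hq hc hX).
        pose proof (pre_hi_eq q c X 0 ltac:(lia)).
        assert (1 <= INR c) by (apply (le_INR 1); lia).
        assert (0 < (INR c + (X - lo q + 0)) / INR q) by (apply div_pos; lra).
        unfold Rdiv in *. rewrite Rmult_0_l in *. lra. }
      assert (INR q = INR c + 1) by (rewrite <- e1, S_INR; auto).
      assert (1 <= INR c) by (apply (le_INR 1); lia).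
      pose proof (pre_hi_eq q c (pre q c X) 0 ltac:(lia)).
      pose proof (pre_lo_eq q c (pre q c X) 0 ltac:(lia)).
      assert (0 < (INR c + (pre q c X - lo q + 0)) / INR q) by (apply div_pos; lra).
      assert (0 < ((INR q - 1 - INR c) + (hi q + 0 - pre q c X)) / INR q) by (apply div_pos; lra).
      unfold Rdiv in *. rewrite Rmult_0_l in *. lra.
    + apply pre_strict; try lia. apply pre_closed; auto.
Qed.

Lemma ipre_open q u k X : (2 <= q)%nat -> (u < q)%nat ->
  lo q < X < hi q -> lo q < ipre q u k X < hi q.
Proof. intros. induction k; simpl; auto. apply pre_open; auto. Qed.

Lemma ipre_clI q u k X : (2 <= q)%nat -> (u < q)%nat ->
  lo q <= X <= hi q -> lo q <= ipre q u k X <= hi q.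
Proof. intros. induction k; simpl; auto. apply pre_closed; auto. Qed.

Lemma ipre_m q u k X e : (2 <= q)%nat -> (u < q)%nat -> 0 <= e ->
  lo q - e <= X <= hi q + e -> lo q - e <= ipre q u k X <= hi q + e.
Proof.
  intros hq hu he hX.
  assert (HQ : 2 <= INR q) by (apply (le_INR 2); lia).
  assert (e / INR q <= e).
  { unfold Rdiv. rewrite <- (Rmult_1_r e) at 2. apply Rmult_le_compat_l; auto.
    left. apply inv_lt1. lra. }
  induction k; simpl; auto.
  pose proof (pre_m q u (ipre q u k X) e hq hu he IHk). lra.
Qed.

Lemma blk_m q u a X e : (2 <= q)%nat -> (u < q)%nat -> (a < q)%nat -> 0 <= e ->
  lo q - e <= X <= hi q + e -> lo q - e / INR q <= blk q u a X <= hi q + e / INR q.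
Proof.
  intros hq hu ha he hX.
  assert (HQ : 2 <= INR q) by (apply (le_INR 2); lia).
  unfold blk. apply ipre_m; auto. apply div_nonneg; lra.
  apply pre_m; auto.
Qed.

Lemma xval_boot q u : (2 <= q)%nat -> (u < q)%nat -> forall n a, admissible q u a ->
  lo q - 4 * (/ INR q) ^ n <= xval q u a <= hi q + 4 * (/ INR q) ^ n.
Proof.
  intros hq hu n.
  assert (HQ : 2 <= INR q) by (apply (le_INR 2); lia).
  induction n as [|n IH]; intros a H.
  - pose proof (xval_crude q u a hq hu H). apply Rabs_le_between in H0.
    assert (0 <= hi q <= 1).
    { unfold hi. split. left; apply Rinv_0_lt_compat; lra. left; apply inv_lt1; lra. }
    assert (-1 <= lo q <= 0) by (pose proof (hi_lo q); lra).
    simpl. lra.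
  - rewrite xval_blk by auto.
    assert (E : 4 * (/ INR q) ^ S n = 4 * (/ INR q) ^ n / INR q).
    { simpl. field. lra. }
    rewrite E. apply blk_m; auto.
    + destruct (H 0%nat); lia.
    + apply Rmult_le_pos; [lra|]. apply pow_le. left; apply Rinv_0_lt_compat; lra.
    + apply IH. apply adm_sh1; auto.
Qed.

Lemma xval_closed q u a : (2 <= q)%nat -> (u < q)%nat -> admissible q u a ->
  lo q <= xval q u a <= hi q.
Proof.
  intros hq hu H.
  assert (HQ : 2 <= INR q) by (apply (le_INR 2); lia).
  assert (Hr : Rabs (/ INR q) < 1).
  { rewrite Rabs_pos_eq. apply inv_lt1; lra. left; apply Rinv_0_lt_compat; lra. }
  split; apply Rnot_lt_le; intro Hc.
  - destruct (pow_lt_1_zero _ Hr ((lo q - xval q u a) / 4) ltac:(lra)) as [N HN].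
    specialize (HN N (le_n N)). pose proof (xval_boot q u hq hu N a H).
    rewrite Rabs_pos_eq in HN by (apply pow_le; left; apply Rinv_0_lt_compat; lra). lra.
  - destruct (pow_lt_1_zero _ Hr ((xval q u a - hi q) / 4) ltac:(lra)) as [N HN].
    specialize (HN N (le_n N)). pose proof (xval_boot q u hq hu N a H).
    rewrite Rabs_pos_eq in HN by (apply pow_le; left; apply Rinv_0_lt_compat; lra). lra.
Qed.

Lemma xval_open q u a : (3 < q)%nat -> (u < q)%nat -> admissible q u a ->
  lo q < xval q u a < hi q.
Proof.
  intros hq hu H.
  rewrite xval_blk by (auto; lia).
  destruct (H 0%nat) as [h1 [h2 h3]].
  pose proof (xval_closed q u (sh1 a) ltac:(lia) hu (adm_sh1 _ _ _ H)) as HX.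
  unfold blk.
  destruct (Nat.lt_ge_cases (S (a 0%nat)) q) as [hs|hs].
  - apply ipre_open; auto; try lia. apply pre_strict; auto; lia.
  - replace (a 0%nat - 1)%nat with (S (S (q - 4))) by lia.
    simpl. apply pre2_strict; try lia.
    apply ipre_clI; try lia. apply pre_closed; auto; lia.
Qed.

Lemma ipre_add q u m k X : ipre q u (m + k) X = ipre q u m (ipre q u k X).
Proof. induction m; simpl; congruence. Qed.

Lemma pre_inv q c X : (1 <= q)%nat -> INR c + X = - pre q c X * INR q.
Proof. intro hq. assert (1 <= INR q) by (apply (le_INR 1); lia). unfold pre. field. lra. Qed.

Lemma ipre_inj q u k X Y : (1 <= q)%nat -> ipre q u k X = ipre q u k Y -> X = Y.
Proof.
  intros hq. induction k; simpl; auto.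
  intro E. apply IHk.
  pose proof (pre_inv q u (ipre q u k X) hq). pose proof (pre_inv q u (ipre q u k Y) hq).
  rewrite E in H. lra.
Qed.

Lemma first_block_lt q u b g : (3 < q)%nat -> (u < q)%nat ->
  admissible q u b -> admissible q u g -> (b 0%nat < g 0%nat)%nat -> xval q u b <> xval q u g.
Proof.
  intros hq hu Hb Hg hlt E.
  rewrite (xval_blk q u b), (xval_blk q u g) in E by (auto; lia).
  unfold blk in E.
  destruct (Hb 0%nat) as [b1 [b2 b3]]. destruct (Hg 0%nat) as [g1 [g2 g3]].
  replace (g 0%nat - 1)%nat with ((b 0%nat - 1) + S (g 0%nat - b 0%nat - 1))%nat in E by lia.
  rewrite ipre_add in E. apply ipre_inj in E; [|lia].
  simpl in E.
  pose proof (pre_inv q (b 0%nat) (xval q u (sh1 b)) ltac:(lia)).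
  pose proof (pre_inv q u (ipre q u (g 0%nat - b 0%nat - 1) (pre q (g 0%nat) (xval q u (sh1 g)))) ltac:(lia)).
  rewrite E in H.
  pose proof (xval_open q u (sh1 b) hq hu (adm_sh1 _ _ _ Hb)).
  assert (HW := ipre_clI q u (g 0%nat - b 0%nat - 1) (pre q (g 0%nat) (xval q u (sh1 g))) ltac:(lia) hu
     (pre_closed q (g 0%nat) _ ltac:(lia) g2 (xval_closed q u (sh1 g) ltac:(lia) hu (adm_sh1 _ _ _ Hg)))).
  pose proof (hi_lo q).
  assert (INR (b 0%nat) - INR u >= 1 \/ INR u - INR (b 0%nat) >= 1).
  { destruct (Nat.lt_ge_cases (b 0%nat) u).
    - right. assert (K : INR (S (b 0%nat)) <= INR u) by (apply le_INR; lia). rewrite S_INR in K. lra.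
    - left. assert (K : INR (S u) <= INR (b 0%nat)) by (apply le_INR; lia). rewrite S_INR in K. lra. }
  lra.
Qed.

Lemma first_block q u b g : (3 < q)%nat -> (u < q)%nat ->
  admissible q u b -> admissible q u g -> b 0%nat <> g 0%nat -> xval q u b <> xval q u g.
Proof.
  intros hq hu Hb Hg hne.
  destruct (Nat.lt_ge_cases (b 0%nat) (g 0%nat)).
  - apply first_block_lt; auto.
  - intro E. symmetry in E. revert E. apply first_block_lt; auto. lia.
Qed.

Lemma xval_inj q u : (3 < q)%nat -> (u < q)%nat -> forall n b g,
  admissible q u b -> admissible q u g -> xval q u b = xval q u g -> b n = g n.
Proof.
  intros hq hu n. induction n as [|n IH]; intros b g Hb Hg E.
  - destruct (Nat.eq_dec (b 0%nat) (g 0%nat)) as [ok|ne]; auto. exfalso; exact (first_block q u b g hq hu Hb Hg ne E).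
  - assert (e0 : b 0%nat = g 0%nat).
    { destruct (Nat.eq_dec (b 0%nat) (g 0%nat)) as [ok|ne]; auto. exfalso; exact (first_block q u b g hq hu Hb Hg ne E). }
    apply (IH (sh1 b) (sh1 g)); auto using adm_sh1.
    rewrite (xval_blk q u b), (xval_blk q u g) in E by (auto; lia).
    rewrite e0 in E.
    assert (D := blk_diff q u (g 0%nat) (xval q u (sh1 b)) (xval q u (sh1 g)) ltac:(lia)
      ltac:(destruct (Hg 0%nat); lia)).
    rewrite E, Rminus_diag in D.
    assert (Hp := negq_pow_nz q (g 0%nat) ltac:(lia)).
    apply Rminus_diag_uniq. unfold Rdiv in D. symmetry in D.
    apply Rmult_integral in D. destruct D as [D|D]; auto.
    exfalso. apply (Rinv_neq_0_compat _ Hp). auto.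
Qed.

Lemma h_eq q u a : (3 < q)%nat -> (u < q)%nat -> admissible q u a ->
  h q u (xval q u a) = hval q a.
Proof.
  intros hq hu H. unfold h.
  set (P := fun alpha => admissible q u alpha /\ xval q u alpha = xval q u a).
  assert (HP : P (epsilon (inhabits (fun _ => 1%nat)) P)).
  { apply epsilon_spec. exists a. split; auto. }
  destruct HP as [H1 H2].
  f_equal. apply functional_extensionality. intro n.
  apply (xval_inj q u hq hu n); auto.
Qed.

Definition sh (n : nat) (a : nat -> nat) : nat -> nat := fun k => a (n + k)%nat.
Fixpoint ps (a : nat -> nat) (n : nat) : nat :=
  match n with O => O | S m => (a 0%nat + ps (sh1 a) m)%nat end.
Definition upd (a : nat -> nat) (n c : nat) : nat -> nat :=
  fun k => if Nat.eqb k n then c else a k.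

Lemma adm_sh q u n a : admissible q u a -> admissible q u (sh n a).
Proof. intros H k. apply H. Qed.

Lemma adm_upd q u a n c : admissible q u a -> (1 <= c)%nat -> (c < q)%nat -> c <> u ->
  admissible q u (upd a n c).
Proof. intros H h1 h2 h3 k. unfold upd. destruct (Nat.eqb k n); auto. Qed.

Lemma ps_S_r a n : ps a (S n) = (ps a n + a n)%nat.
Proof.
  revert a. induction n as [|n IH]; intro a.
  - simpl. lia.
  - change (ps a (S (S n))) with (a 0%nat + ps (sh1 a) (S n))%nat.
    rewrite IH. simpl. unfold sh1. lia.
Qed.

Lemma ps_mono q u a n m : admissible q u a -> (n <= m)%nat -> (ps a n + (m - n) <= ps a m)%nat.
Proof.
  intros H hnm. induction m as [|m IH].
  - replace n with 0%nat by lia. simpl. lia.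
  - destruct (Nat.eq_dec n (S m)) as [e|ne].
    + subst. lia.
    + rewrite ps_S_r. destruct (H m). specialize (IH ltac:(lia)). lia.
Qed.

Lemma w_mono q m s : (2 <= q)%nat -> (m <= s)%nat -> (/ INR q) ^ s <= (/ INR q) ^ m.
Proof.
  intros hq hms. assert (HQ : 2 <= INR q) by (apply (le_INR 2); lia).
  rewrite !pow_inv. apply Rinv_le_contravar. apply pow_lt; lra. apply Rle_pow; [lra|lia].
Qed.

Lemma abs_div_pow q X m : (1 <= q)%nat ->
  Rabs (X / (- INR q) ^ m) = Rabs X * (/ INR q) ^ m.
Proof.
  intro hq. assert (HQ : 1 <= INR q) by (apply (le_INR 1); lia).
  unfold Rdiv. rewrite Rabs_mult, Rabs_inv, <- RPow_abs, Rabs_Ropp.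
  rewrite (Rabs_pos_eq (INR q)) by lra. rewrite pow_inv. reflexivity.
Qed.

Lemma prefix q u : (3 < q)%nat -> (u < q)%nat -> forall n a a',
  admissible q u a -> admissible q u a' -> (forall k, (k < n)%nat -> a' k = a k) ->
  hval q a' - hval q a = (hval q (sh n a') - hval q (sh n a)) / (- INR q) ^ n /\
  xval q u a' - xval q u a = (xval q u (sh n a') - xval q u (sh n a)) / (- INR q) ^ (ps a n).
Proof.
  intros hq hu n.
  assert (HQ : 2 <= INR q) by (apply (le_INR 2); lia).
  induction n as [|n IH]; intros a a' H H' E.
  - replace (sh 0 a') with a' by reflexivity. replace (sh 0 a) with a by reflexivity.
    simpl. split; field.
  - destruct (IH (sh1 a) (sh1 a') (adm_sh1 _ _ _ H) (adm_sh1 _ _ _ H')) as [IH1 IH2].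
    { intros k hk. unfold sh1. apply E. lia. }
    replace (sh n (sh1 a')) with (sh (S n) a') in IH1, IH2 by reflexivity.
    replace (sh n (sh1 a)) with (sh (S n) a) in IH1, IH2 by reflexivity.
    assert (e0 : a' 0%nat = a 0%nat) by (apply E; lia).
    split.
    + rewrite (hval_S q u a'), (hval_S q u a) by (auto; lia).
      rewrite e0.
      replace (- (INR (a 0%nat) + hval q (sh1 a')) / INR q - - (INR (a 0%nat) + hval q (sh1 a)) / INR q)
        with ((hval q (sh1 a') - hval q (sh1 a)) / (- INR q)) by (field; lra).
      rewrite IH1. simpl. field. split; [apply negq_pow_nz; lia | lra].
    + rewrite (xval_blk q u a'), (xval_blk q u a) by (auto; lia).
      rewrite e0. rewrite blk_diff by (try lia; destruct (H 0%nat); lia).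
      rewrite IH2. simpl ps. rewrite pow_add. field.
      split; apply negq_pow_nz; lia.
Qed.

Lemma ex_c (u b : nat) : exists c, (1 <= c <= 3)%nat /\ c <> u /\ c <> b.
Proof.
  destruct (Nat.eq_dec u 1), (Nat.eq_dec b 1), (Nat.eq_dec u 2), (Nat.eq_dec b 2);
  first [exists 1%nat; lia | exists 2%nat; lia | exists 3%nat; lia].
Qed.

Lemma case1 q u a l : (3 < q)%nat -> (u < q)%nat -> admissible q u a ->
  (forall N, exists k, (N <= k)%nat /\ a k <> 1%nat) ->
  limit1_in (fun x => (h q u x - hval q a) / (x - xval q u a))
    (fun x => Dh q u x /\ x <> xval q u a) l (xval q u a) -> False.
Proof.
  intros hq hu Ha HN Hl.
  assert (HQ : 2 <= INR q) by (apply (le_INR 2); lia).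
  set (w := / INR q).
  assert (Hw : 0 < w < 1) by (split; [apply Rinv_0_lt_compat; lra | apply inv_lt1; lra]).
  assert (Unb : forall K, exists n, (n + K <= ps a n)%nat).
  { induction K as [|K IH].
    - exists 0%nat. simpl. lia.
    - destruct IH as [n Hn]. destruct (HN n) as [k [hk hk1]].
      exists (S k). rewrite ps_S_r. pose proof (ps_mono q u a n k Ha hk).
      destruct (Ha k). lia. }
  destruct (Hl 1 ltac:(lra)) as [d [Hd Hx]].
  set (y := Rmin (d / 6) (/ (6 * (Rabs l + 1)))).
  assert (Hy : 0 < y).
  { unfold y. apply Rmin_glb_lt. lra. apply Rinv_0_lt_compat. pose proof (Rabs_pos l). lra. }
  assert (Hr : Rabs w < 1) by (rewrite Rabs_pos_eq; lra).
  destruct (pow_lt_1_zero w Hr y Hy) as [K HK].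
  specialize (HK K (le_n K)). rewrite Rabs_pos_eq in HK by (apply pow_le; lra).
  destruct (Unb (S K)) as [n Hn].
  destruct (ex_c u (a n)) as [c [hc1 [hc2 hc3]]].
  set (a' := upd a n c).
  assert (Ha' : admissible q u a') by (apply adm_upd; auto; lia).
  destruct (prefix q u hq hu n a a' Ha Ha') as [P1 P2].
  { intros k hk. unfold a', upd. destruct (Nat.eqb_spec k n); auto; lia. }
  assert (Esh : sh1 (sh n a') = sh1 (sh n a)).
  { apply functional_extensionality. intro k. unfold sh1, sh, a', upd.
    destruct (Nat.eqb_spec (n + S k) n); auto; lia. }
  assert (E0' : sh n a' 0%nat = c).
  { unfold sh, a', upd. rewrite Nat.add_0_r, Nat.eqb_refl. auto. }
  assert (E0 : sh n a 0%nat = a n) by (unfold sh; f_equal; lia).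
  set (Dx := xval q u (sh n a') - xval q u (sh n a)).
  assert (HDx : Dx <> 0).
  { unfold Dx. intro C. apply Rminus_diag_uniq in C. revert C.
    apply first_block; auto using adm_sh. rewrite E0', E0. auto. }
  assert (HDx6 : Rabs Dx <= 6).
  { unfold Dx. pose proof (xval_crude q u (sh n a') ltac:(lia) hu (adm_sh _ _ _ _ Ha')).
    pose proof (xval_crude q u (sh n a) ltac:(lia) hu (adm_sh _ _ _ _ Ha)).
    apply Rabs_le_between in H. apply Rabs_le_between in H0. apply Rabs_le. lra. }
  set (Dhh := hval q (sh n a') - hval q (sh n a)).
  assert (HDh : w <= Rabs Dhh).
  { unfold Dhh. rewrite (hval_S q u (sh n a')), (hval_S q u (sh n a)) by (auto using adm_sh; lia).
    rewrite Esh, E0', E0.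
    replace (- (INR c + hval q (sh1 (sh n a))) / INR q - - (INR (a n) + hval q (sh1 (sh n a))) / INR q)
      with ((INR (a n) - INR c) * w) by (unfold w; field; lra).
    rewrite Rabs_mult, (Rabs_pos_eq w) by lra.
    assert (1 <= Rabs (INR (a n) - INR c)).
    { destruct (Nat.lt_ge_cases (a n) c).
      - assert (K1 : INR (S (a n)) <= INR c) by (apply le_INR; lia). rewrite S_INR in K1.
        rewrite Rabs_left1 by lra. lra.
      - assert (K1 : INR (S c) <= INR (a n)) by (apply le_INR; lia). rewrite S_INR in K1.
        rewrite Rabs_pos_eq by lra. lra. }
    nra. }
  set (S0 := ps a n).
  assert (Hws : w ^ S0 <= w ^ n * w * w ^ K).
  { replace (w ^ n * w * w ^ K) with (w ^ (n + S K)).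
    - apply w_mono; lia.
    - rewrite pow_add. simpl. ring. }
  assert (HwK : w ^ S0 <= w ^ K) by (apply w_mono; lia).
  assert (Hdx : Rabs (Dx / (- INR q) ^ S0) <= 6 * (w ^ n * w * w ^ K)).
  { rewrite abs_div_pow by lia. fold w.
    apply Rle_trans with (6 * w ^ S0).
    - apply Rmult_le_compat_r; [apply pow_le; lra | exact HDx6].
    - apply Rmult_le_compat_l; lra. }
  assert (Hdh : Rabs (Dhh / (- INR q) ^ n) >= w ^ n * w).
  { rewrite abs_div_pow by lia. fold w. assert (0 < w ^ n) by (apply pow_lt; lra). nra. }
  assert (Hne : Dx / (- INR q) ^ S0 <> 0).
  { unfold Rdiv. intro C. apply Rmult_integral in C. destruct C as [C|C]; auto.
    apply (Rinv_neq_0_compat _ (negq_pow_nz q S0 ltac:(lia))). auto. }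
  specialize (Hx (xval q u a')).
  simpl in Hx. unfold R_dist in Hx.
  rewrite h_eq in Hx by auto.
  fold S0 in P2. fold Dx in P2. fold Dhh in P1.
  assert (Hyd : y <= d / 6) by apply Rmin_l.
  assert (Hyl : y <= / (6 * (Rabs l + 1))) by apply Rmin_r.
  assert (Hdist : Rabs (Dx / (- INR q) ^ S0) < d).
  { rewrite abs_div_pow by lia. fold w.
    apply Rle_lt_trans with (6 * w ^ S0).
    - apply Rmult_le_compat_r; [apply pow_le; lra | exact HDx6].
    - lra. }
  assert (Hne2 : xval q u a' <> xval q u a).
  { intro C. apply Hne. rewrite <- P2. rewrite C. ring. }
  rewrite <- P2 in Hdist.
  specialize (Hx (conj (conj (ex_intro _ a' (conj Ha' eq_refl)) Hne2) Hdist)).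
  rewrite P1, P2 in Hx.
  set (Qv := Dhh / (- INR q) ^ n / (Dx / (- INR q) ^ S0)) in Hx.
  assert (HQv : Rabs Qv < Rabs l + 1).
  { pose proof (Rabs_triang_inv Qv l). lra. }
  assert (EQ : Dhh / (- INR q) ^ n = Qv * (Dx / (- INR q) ^ S0)) by (unfold Qv; field; repeat split; auto; apply negq_pow_nz; lia).
  assert (Hl1 : 0 < Rabs l + 1) by (pose proof (Rabs_pos l); lra).
  assert (T : 6 * w ^ K * (Rabs l + 1) < 1).
  { assert (w ^ K < / (6 * (Rabs l + 1))) by lra.
    apply Rmult_lt_compat_r with (r := 6 * (Rabs l + 1)) in H; [|lra].
    rewrite Rinv_l in H by lra. lra. }
  rewrite EQ, Rabs_mult in Hdh.
  assert (0 < w ^ n * w) by (apply Rmult_lt_0_compat; [apply pow_lt|]; lra).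
  assert (Rabs Qv * Rabs (Dx / (- INR q) ^ S0) <= (Rabs l + 1) * (6 * (w ^ n * w * w ^ K))).
  { apply Rmult_le_compat; auto using Rabs_pos. lra. }
  nra.
Qed.

Lemma case2 q u a l : (3 < q)%nat -> (u < q)%nat -> admissible q u a ->
  (exists N, forall k, (N <= k)%nat -> a k = 1%nat) ->
  limit1_in (fun x => (h q u x - hval q a) / (x - xval q u a))
    (fun x => Dh q u x /\ x <> xval q u a) l (xval q u a) -> False.
Proof.
  intros hq hu Ha [N HN] Hl.
  assert (HQ : 2 <= INR q) by (apply (le_INR 2); lia).
  set (w := / INR q).
  assert (Hw : 0 < w < 1) by (split; [apply Rinv_0_lt_compat; lra | apply inv_lt1; lra]).
  assert (u1 : u <> 1%nat) by (destruct (Ha N) as [_ [_ X]]; rewrite HN in X; auto).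
  set (c := if Nat.eqb u 2 then 3%nat else 2%nat).
  assert (hc : (c = 2 \/ c = 3)%nat /\ c <> u).
  { unfold c. destruct (Nat.eqb_spec u 2); lia. }
  destruct hc as [hc1 hc2].
  set (ones := fun _ : nat => 1%nat).
  set (t1 := fun k : nat => match k with O => c | _ => 1%nat end).
  set (t2 := fun k : nat => match k with O => c | 1 => c | _ => 1%nat end).
  assert (Ho : admissible q u ones) by (intro k; unfold ones; lia).
  assert (H1 : admissible q u t1) by (intro k; unfold t1; destruct k; lia).
  assert (H2 : admissible q u t2) by (intro k; unfold t2; destruct k as [|[|k]]; lia).
  set (Zh := hval q ones). set (Zx := xval q u ones).
  assert (EZh : Zh = - (1 + Zh) / INR q).
  { unfold Zh at 1. rewrite (hval_S q u ones) by (auto; lia). reflexivity. }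
  assert (Eh1 : hval q t1 = - (INR c + Zh) / INR q).
  { rewrite (hval_S q u t1) by (auto; lia). reflexivity. }
  assert (Eh2 : hval q t2 = - (INR c + hval q t1) / INR q).
  { rewrite (hval_S q u t2) by (auto; lia). reflexivity. }
  assert (EZx : Zx = blk q u 1 Zx).
  { unfold Zx at 1. rewrite (xval_blk q u ones) by (auto; lia). reflexivity. }
  assert (Ex1 : xval q u t1 = blk q u c Zx).
  { rewrite (xval_blk q u t1) by (auto; lia). reflexivity. }
  assert (Ex2 : xval q u t2 = blk q u c (xval q u t1)).
  { rewrite (xval_blk q u t2) by (auto; lia). reflexivity. }
  set (p := xval q u t1 - Zx).
  assert (Hp : p <> 0).
  { unfold p. intro C. apply Rminus_diag_uniq in C. revert C.
    apply first_block; auto. unfold t1, ones. lia. }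
  set (Dx2 := xval q u t2 - Zx).
  assert (EDx2 : Dx2 = p * (1 + / (- INR q) ^ c)).
  { unfold Dx2. replace (xval q u t2 - Zx) with ((xval q u t2 - blk q u c Zx) + (blk q u c Zx - Zx)) by ring.
    rewrite Ex2, blk_diff by lia. rewrite <- Ex1. fold p. field. apply negq_pow_nz; lia. }
  assert (HDx2 : Dx2 <> 0).
  { unfold Dx2. intro C. apply Rminus_diag_uniq in C. revert C.
    apply first_block; auto. unfold t2, ones. lia. }
  set (Dh1 := hval q t1 - Zh). set (Dh2 := hval q t2 - Zh).
  assert (EDh1 : Dh1 = - (INR c - 1) * w).
  { unfold Dh1, w. rewrite Eh1. rewrite EZh at 2. field. lra. }
  assert (EDh2 : Dh2 = - (INR c - 1) * w * (1 - w)).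
  { unfold Dh2, w. rewrite Eh2. replace (hval q t1) with (Dh1 + Zh) by (unfold Dh1; ring).
    rewrite EDh1. rewrite EZh at 2. unfold w. field. lra. }
  assert (Hc1 : 1 < INR c) by (destruct hc1 as [e|e]; rewrite e; simpl; lra).
  set (g1 := Dh1 / p). set (g2 := Dh2 / Dx2).
  assert (Hg : g1 <> g2).
  { intro C. unfold g1, g2 in C.
    assert (C2 : Dh1 * Dx2 = Dh2 * p).
    { apply (Rmult_eq_compat_r (p * Dx2)) in C. replace (Dh1 / p * (p * Dx2)) with (Dh1 * Dx2) in C by (field; auto).
      replace (Dh2 / Dx2 * (p * Dx2)) with (Dh2 * p) in C by (field; auto). auto. }
    rewrite EDx2, EDh1, EDh2 in C2.
    assert (C3 : 1 + / (- INR q) ^ c = 1 - w).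
    { apply Rmult_eq_reg_l with (- (INR c - 1) * w * p).
      - replace (- (INR c - 1) * w * p * (1 + / (- INR q) ^ c)) with (- (INR c - 1) * w * (p * (1 + / (- INR q) ^ c))) by ring.
        rewrite C2. ring.
      - intro C4. apply Rmult_integral in C4. destruct C4 as [C4|C4]; [|auto].
        apply Rmult_integral in C4. destruct C4; lra. }
    rewrite <- pow_inv, Rinv_opp in C3. fold w in C3.
    destruct hc1 as [e|e]; rewrite e in C3; simpl in C3; nra. }
  assert (Heps : 0 < Rabs (g1 - g2) / 2).
  { apply Rdiv_lt_0_compat; [|lra]. apply Rabs_pos_lt. intro C. apply Hg. lra. }
  destruct (Hl _ Heps) as [d [Hd Hx]]. simpl in Hx. unfold R_dist in Hx.
  assert (Hr : Rabs w < 1) by (rewrite Rabs_pos_eq; lra).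
  destruct (pow_lt_1_zero w Hr (d / 6) ltac:(lra)) as [N0 HN0].
  set (n := Nat.max N N0).
  specialize (HN0 n ltac:(lia)). rewrite Rabs_pos_eq in HN0 by (apply pow_le; lra).
  set (a1 := upd a n c). set (a2 := upd a1 (S n) c).
  assert (Ha1 : admissible q u a1) by (apply adm_upd; auto; lia).
  assert (Ha2 : admissible q u a2) by (apply adm_upd; auto; lia).
  assert (Sa : sh n a = ones).
  { apply functional_extensionality. intro k. unfold sh, ones. apply HN. lia. }
  assert (Sa1 : sh n a1 = t1).
  { apply functional_extensionality. intro k. unfold sh, t1, a1, upd.
    destruct k as [|k].
    - rewrite Nat.add_0_r, Nat.eqb_refl. auto.
    - destruct (Nat.eqb_spec (n + S k) n); [lia|]. apply HN. lia. }
  assert (Sa2 : sh n a2 = t2).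
  { apply functional_extensionality. intro k. unfold sh, t2, a2, a1, upd.
    destruct k as [|[|k]].
    - destruct (Nat.eqb_spec (n + 0) (S n)); [lia|]. rewrite Nat.add_0_r, Nat.eqb_refl. auto.
    - destruct (Nat.eqb_spec (n + 1) (S n)); [auto|lia].
    - destruct (Nat.eqb_spec (n + S (S k)) (S n)); [lia|].
      destruct (Nat.eqb_spec (n + S (S k)) n); [lia|]. apply HN. lia. }
  destruct (prefix q u hq hu n a a1 Ha Ha1) as [P11 P12].
  { intros k hk. unfold a1, upd. destruct (Nat.eqb_spec k n); auto; lia. }
  destruct (prefix q u hq hu n a a2 Ha Ha2) as [P21 P22].
  { intros k hk. unfold a2, a1, upd. destruct (Nat.eqb_spec k (S n)); [lia|].
    destruct (Nat.eqb_spec k n); auto; lia. }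
  rewrite Sa, Sa1 in P11, P12. rewrite Sa, Sa2 in P21, P22.
  fold Zh Dh1 in P11. fold Zh Dh2 in P21. fold Zx p in P12. fold Zx Dx2 in P22.
  set (S0 := ps a n) in *.
  assert (HS0 : (n <= S0)%nat) by (pose proof (ps_mono q u a 0 n Ha ltac:(lia)); simpl in *; lia).
  assert (HwS : w ^ S0 <= w ^ n) by (apply w_mono; lia).
  assert (Cr1 := xval_crude q u t1 ltac:(lia) hu H1).
  assert (Cr2 := xval_crude q u t2 ltac:(lia) hu H2).
  assert (Cr0 := xval_crude q u ones ltac:(lia) hu Ho).
  apply Rabs_le_between in Cr1. apply Rabs_le_between in Cr2. apply Rabs_le_between in Cr0.
  assert (Hpn : (- INR q) ^ S0 <> 0) by (apply negq_pow_nz; lia).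
  assert (Hnn : (- INR q) ^ n <> 0) by (apply negq_pow_nz; lia).
  assert (Hd1 : Rabs (p / (- INR q) ^ S0) < d).
  { rewrite abs_div_pow by lia. fold w.
    assert (Rabs p <= 6) by (unfold p; fold Zx in Cr0; apply Rabs_le; lra).
    apply Rle_lt_trans with (6 * w ^ S0).
    - apply Rmult_le_compat_r; [apply pow_le; lra | auto].
    - lra. }
  assert (Hd2 : Rabs (Dx2 / (- INR q) ^ S0) < d).
  { rewrite abs_div_pow by lia. fold w.
    assert (Rabs Dx2 <= 6) by (unfold Dx2; fold Zx in Cr0; apply Rabs_le; lra).
    apply Rle_lt_trans with (6 * w ^ S0).
    - apply Rmult_le_compat_r; [apply pow_le; lra | auto].
    - lra. }
  assert (Hne1 : xval q u a1 <> xval q u a).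
  { intro C. apply Rminus_diag_eq in C. rewrite P12 in C. unfold Rdiv in C.
    apply Rmult_integral in C. destruct C as [C|C]; auto. apply (Rinv_neq_0_compat _ Hpn); auto. }
  assert (Hne2 : xval q u a2 <> xval q u a).
  { intro C. apply Rminus_diag_eq in C. rewrite P22 in C. unfold Rdiv in C.
    apply Rmult_integral in C. destruct C as [C|C]; auto. apply (Rinv_neq_0_compat _ Hpn); auto. }
  rewrite <- P12 in Hd1. rewrite <- P22 in Hd2.
  pose proof (Hx _ (conj (conj (ex_intro _ a1 (conj Ha1 eq_refl)) Hne1) Hd1)) as Q1.
  pose proof (Hx _ (conj (conj (ex_intro _ a2 (conj Ha2 eq_refl)) Hne2) Hd2)) as Q2.
  rewrite h_eq in Q1, Q2 by auto.
  rewrite P11, P12 in Q1. rewrite P21, P22 in Q2.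
  set (rho := (- INR q) ^ S0 / (- INR q) ^ n).
  assert (E1 : Dh1 / (- INR q) ^ n / (p / (- INR q) ^ S0) = rho * g1).
  { unfold rho, g1. field. auto. }
  assert (E2 : Dh2 / (- INR q) ^ n / (Dx2 / (- INR q) ^ S0) = rho * g2).
  { unfold rho, g2. field. auto. }
  rewrite E1 in Q1. rewrite E2 in Q2.
  assert (Hrho : 1 <= Rabs rho).
  { unfold rho. unfold Rdiv. rewrite Rabs_mult, Rabs_inv, <- !RPow_abs, Rabs_Ropp.
    rewrite (Rabs_pos_eq (INR q)) by lra.
    assert (INR q ^ n <= INR q ^ S0) by (apply Rle_pow; [lra|lia]).
    assert (0 < INR q ^ n) by (apply pow_lt; lra).
    apply Rmult_le_reg_r with (INR q ^ n); auto.
    rewrite Rmult_assoc, Rinv_l by lra. lra. }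
  assert (Rabs (rho * g1 - rho * g2) < 2 * (Rabs (g1 - g2) / 2)).
  { replace (rho * g1 - rho * g2) with ((rho * g1 - l) - (rho * g2 - l)) by ring.
    eapply Rle_lt_trans. apply Rabs_triang. rewrite Rabs_Ropp. lra. }
  replace (rho * g1 - rho * g2) with (rho * (g1 - g2)) in H by ring.
  rewrite Rabs_mult in H.
  assert (0 <= Rabs (g1 - g2)) by apply Rabs_pos.
  nra.
Qed.

Theorem theorem3p1 (q u : nat) (hq : (3 < q)%nat) (hu : (u < q)%nat)
  (x0 : R) (hx0 : Dh q u x0) :
  ~ (exists l : R,
       limit1_in (fun x => (h q u x - h q u x0) / (x - x0))
                 (fun x => Dh q u x /\ x <> x0) l x0).
Proof.
  intros [l Hl].
  pose (P := fun alpha => admissible q u alpha /\ xval q u alpha = x0).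
  assert (HP : P (epsilon (inhabits (fun _ : nat => 1%nat)) P)) by (apply epsilon_spec; exact hx0).
  assert (Hh0 : h q u x0 = hval q (epsilon (inhabits (fun _ : nat => 1%nat)) P)) by reflexivity.
  set (a := epsilon (inhabits (fun _ : nat => 1%nat)) P) in HP, Hh0.
  clearbody a. destruct HP as [Ha Hx0].
  rewrite Hh0 in Hl. rewrite <- Hx0 in Hl.
  destruct (classic (exists N, forall k, (N <= k)%nat -> a k = 1%nat)) as [HN|HN].
  - exact (case2 q u a l hq hu Ha HN Hl).
  - apply (case1 q u a l hq hu Ha); auto.
    intro N. apply NNPP. intro C. apply HN. exists N. intros k hk.
    apply NNPP. intro C2. apply C. exists k. auto.
Qed.
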